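(* Let $B=F(b_1,\ldots,b_n)$ be a Ferrers board with $0\le b_1\le\cdots\le b_n$. Then, as polynomials in $x$, $$x^n=\sum_{k=0}^n \mathbf{rT}_{n-k}(B,p,q)\,(x-F_{b_1}(p,q))(x-F_{b_2}(p,q))\cdots(x-F_{b_k}(p,q)),$$ where the empty product ($k=0$) equals 1.
   Context: For $m\ge 1$, a Fibonacci tiling of height $m$ is a tiling of a column of height $m$ by tiles of height 1 and height 2 whose bottom-most tile has height 1. For such a tiling $T$, $\mathrm{one}(T)$ and $\mathrm{two}(T)$ denote the numbers of tiles of height 1 and 2, and $F_m(p,q)=\sum_T q^{\mathrm{one}(T)}p^{\mathrm{two}(T)}$ over all Fibonacci tilings of height $m$ (so $F_1=q$, $F_2=q^2$, $F_m=qF_{m-1}+pF_{m-2}$ for $m\ge 3$). There are no Fibonacci tilings of height $0$, and $F_0(p,q)=0$. A Ferrers board $F(b_1,\ldots,b_n)$ is the board whose columns, from left to right, have heights $b_1,\ldots,b_n$. A Fibonacci rook placement of $k$ tilings in $B=F(b_1,\ldots,b_n)$ consists of a choice of columns $1\le i_1<\cdots<i_k\le n$ together with, for each $s=1,\ldots,k$, a Fibonacci tiling of height $b_{i_s-(s-1)}$ placed in column $i_s$ (the number of cells of column $i_s$ not canceled by earlier tilings, each tiling canceling top cells of columns to its right so that after $s$ tilings the untiled columns have $b_1,\ldots,b_{n-s}$ uncanceled cells). Its weight is $q^{a}p^{b}$ where $a$ (resp. $b$) is the total number of tiles of height 1 (resp. 2) used. $\mathbf{rT}_k(B,p,q)$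 is the sum of the weights of all Fibonacci rook placements of $k$ tilings in $B$ (the empty placement has weight 1). *)

(* Defs.v *)
From mathcomp Require Import all_boot all_order all_algebra.
Set Implicit Arguments. Unset Strict Implicit. Unset Printing Implicit Defensive.
Import GRing.Theory.
Local Open Scope ring_scope.

(* A tiling of a column is listed bottom-to-top as a sequence of tile heights
   (each 1 or 2).  [all_tilings m] lists every tiling of a column of height m. *)
Fixpoint all_tilings (m : nat) : seq (seq nat) :=
  match m with
  | 0 => [:: [::]]
  | 1 => [:: [:: 1%N]]
  | (m'.+1 as m1).+1 =>
      map (cons 1%N) (all_tilings m1) ++ map (cons 2%N) (all_tilings m')
  end.

Definition fib_tilings (m : nat) : seq (seq nat) :=
  match m with
  | 0 => [::]
  | m'.+1 => map (cons 1%N) (all_tilings m')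
  end.

Definition tiling_weight (R : comNzRingType) (p q : R) (T : seq nat) : R :=
  q ^+ count_mem 1%N T * p ^+ count_mem 2%N T.

Definition Fib (R : comNzRingType) (m : nat) (p q : R) : R :=
  \sum_(T <- fib_tilings m) tiling_weight p q T.

(* Ferrers board F(b_1,...,b_n) is given by the list b of column heights
   (0-indexed: b`_0 = b_1).  A Fibonacci rook placement of k tilings is a
   strictly increasing k-tuple of columns (i_0 < ... < i_{k-1}, 0-indexed)
   together with, for each s < k, a Fibonacci tiling of height b`_(i_s - s)
   (the 1-indexed b_{i_s-(s-1)}).  The sum over the tilings of the weights of
   the placement factors as the product of the F's below. *)
Definition rT (R : comNzRingType) (k : nat) (b : seq nat) (p q : R) : R :=
  \sum_(t : k.-tuple 'I_(size b) | sorted ltn (map val t))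
    \prod_(s < k)
      Fib (nth 0%N b (val (tnth t s) - val s)) p q.

(* Main.v *)
Require Import Defs.
From mathcomp Require Import all_boot all_order all_algebra.
From mathcomp Require Import ring lra zify.
Import GRing.Theory.
Local Open Scope ring_scope.

Lemma sum_tuple0 (R : comNzRingType) (T : finType) (F : 0.-tuple T -> R) :
  \sum_(t : 0.-tuple T) F t = F [tuple].
Proof. by rewrite (big_pred1 [tuple]) // => t; rewrite /= [t]tuple0; apply/esym/eqP. Qed.

Lemma sum_tupleS (R : comNzRingType) (T : finType) m (F : m.+1.-tuple T -> R) :
  \sum_(t : m.+1.-tuple T) F t =
  \sum_(x : T) \sum_(t : m.-tuple T) F [tuple of x :: t].
Proof.
rewrite pair_bigA /=.
rewrite (reindex (fun p : T * m.-tuple T => [tuple of p.1 :: p.2])) //=.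
exists (fun t : m.+1.-tuple T => (thead t, [tuple of behead t])).
  by case=> x t _ /=; rewrite theadE; congr (_, _); apply: val_inj.
by move=> t _ /=; rewrite [RHS]tuple_eta.
Qed.

Section S.
Variables (R : comNzRingType) (n : nat) (a : nat -> R).

Fixpoint K (m lo off : nat) : R :=
  match m with
  | 0 => 1
  | m'.+1 => \sum_(x < n | (lo <= x)%N) a (x - off) * K m' x.+1 off.+1
  end.

Lemma KS m lo off : K m.+1 lo off =
  \sum_(x < n | (lo <= x)%N) a (x - off) * K m x.+1 off.+1.
Proof. by []. Qed.

Lemma predE (lo x : nat) (s : seq nat) : (lo <= x)%N ->
  [&& path ltn x s, true & all (leq lo) s] = sorted ltn s && all (leq x.+1) s.
Proof.
move=> hx; rewrite path_sortedE; last exact: ltn_trans.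
case E: (all (ltn x) s) => /=; last first.
  by case: (sorted ltn s) => //=; apply/negbTE; move: E; apply: contraFN.
congr (_ && _); apply/allP => y Hy.
by have := allP E y Hy => /ltnW; apply: leq_trans.
Qed.

Lemma SK m lo off :
  \sum_(t : m.-tuple 'I_n | sorted ltn (map val t) && all (leq lo) (map val t))
     \prod_(s < m) a (val (tnth t s) - (s + off)) = K m lo off.
Proof.
elim: m lo off => [|m IH] lo off.
  by rewrite big_mkcond sum_tuple0 /= big_ord0.
rewrite KS big_mkcond sum_tupleS (bigID (fun x : 'I_n => (lo <= x)%N)) /=.
rewrite [X in _ + X]big1 ?addr0; last first.
  move=> x; rewrite -ltnNge => hx; rewrite big1 // => t _ /=.
  by rewrite leqNgt hx /= andbF.
eapply eq_bigr => x hx.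
rewrite -IH mulr_sumr [RHS]big_mkcond; eapply eq_bigr => t _ /=.
rewrite hx (predE _ _ _ hx).
case: (_ && _) => //.
rewrite big_ord_recl /= add0n; congr (_ * _).
eapply eq_bigr => s _; by rewrite tnthS /bump add1n addSnnS.
Qed.
End S.

Section H.
Variables (R : comNzRingType) (a : nat -> R).

Fixpoint H (m i j : nat) : R :=
  match m with
  | 0 => 1
  | m'.+1 => \sum_(i <= c < j) a c * H m' c j
  end.

Lemma HS m i j : H m.+1 i j = \sum_(i <= c < j) a c * H m c j.
Proof. by []. Qed.

Lemma H0 m i j : (j <= i)%N -> H m.+1 i j = 0.
Proof. by move=> h; rewrite HS big_geq. Qed.

Lemma Hrec m i j : (i <= j)%N -> H m.+1 i j.+1 = H m.+1 i j + a j * H m i j.+1.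
Proof.
elim: m i j => [|m IH] i j hij.
  by rewrite !HS big_nat_recr.
rewrite (HS m.+1 i j.+1) big_nat_recr // (HS m j j.+1) big_nat1.
rewrite (HS m.+1 i j) (HS m i j.+1) big_nat_recr //.
rewrite (eq_big_nat _ _ (F2 := fun c => a c * H m.+1 c j + a j * (a c * H m c j.+1))); last first.
  by move=> c /andP[_ hc]; rewrite IH ?(ltnW hc) // mulrDr mulrCA.
by rewrite big_split /= -mulr_sumr mulrDr addrA.
Qed.

Lemma sum_trunc i j u (G : nat -> R) : (j <= u)%N ->
  (forall c, (j <= c < u)%N -> G c = 0) ->
  \sum_(i <= c < u) G c = \sum_(i <= c < j) G c.
Proof.
move=> hju hG; rewrite (big_nat_widen _ _ _ _ _ hju) big_mkcond [RHS]big_mkcond /=.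
apply: eq_big_nat => c /andP[hic hcu] /=.
case: ltnP => // hjc; by rewrite hG // hjc.
Qed.

Lemma KH n m lo off : (off <= lo)%N -> (m + off <= n)%N ->
  @K R n a m lo off = H m (lo - off) (n - m - off).+1.
Proof.
elim: m lo off => [|m IH] lo off hoff hmn; first by [].
rewrite KS HS.
have [j hjd] : {j | j = (n - m.+1 - off).+1} by eexists.
rewrite -hjd.
have hj : (n - m - off.+1).+1 = j by rewrite hjd; lia.
rewrite (eq_bigr (fun x : 'I_n => a (x - off) * H m (x - off) j)); last first.
  move=> x hx; rewrite IH; [|lia|lia]; by rewrite hj subSS.
have -> : \sum_(x < n | (lo <= x)%N) a (x - off) * H m (x - off) j =
  \sum_(lo <= x < n) a (x - off) * H m (x - off) j by rewrite big_geq_mkord.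
rewrite -{1}(subnK hoff) big_addn.
rewrite (eq_big_nat _ _ (F2 := fun c => a c * H m c j)); last by move=> c _; rewrite addnK.
apply: sum_trunc; first by rewrite hjd; lia.
move=> c /andP[h1 h2]; case: m IH hmn hj hjd h1 h2 => [|m] IH hmn hj hjd h1 h2.
  rewrite hjd in h1 h2; lia.
by rewrite H0 ?mulr0.
Qed.
End H.

Section P.
Variables (R : comNzRingType) (a : nat -> R).
Definition PP k : {poly R} := \prod_(j < k) ('X - (a j)%:P).

Lemma XP k : 'X * PP k = PP k.+1 + (a k)%:P * PP k.
Proof.
by rewrite /PP big_ord_recr /= mulrBr [(a k)%:P * _]mulrC subrK mulrC.
Qed.

Lemma poly_id N : 'X ^+ N = \sum_(k < N.+1) (H R a (N - k) 0 k.+1)%:P * PP k.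
Proof.
elim: N => [|N IH].
  by rewrite big_ord_recl big_ord0 /= /PP big_ord0 expr0 mulr1 addr0.
rewrite exprS IH mulr_sumr.
rewrite (eq_bigr (fun k : 'I_N.+1 => (H R a (N - k) 0 k.+1)%:P * PP k.+1 +
      (a k * H R a (N - k) 0 k.+1)%:P * PP k)); last first.
  by move=> k _; rewrite mulrCA XP mulrDr polyCM mulrCA mulrA.
rewrite big_split /= [X in X + _]big_ord_recr [X in _ + X]big_ord_recl /=.
rewrite [RHS]big_ord_recl [X in _ = _ + X]big_ord_recr /=.
rewrite /bump /= !add1n !subSS !subnn !subn0 big_nat1.
set A := \sum_(i < N) _.
set B := \sum_(i < N) _.
set C := \sum_(i < N) _.
have -> : C = A + B.
  rewrite /A /B /C -big_split /=; apply: eq_bigr => k _.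
  rewrite !add1n subSS.
  have -> : (N - k = (N - k.+1).+1)%N by have := ltn_ord k; lia.
  by rewrite Hrec // polyCD mulrDl.
rewrite /= polyC1 !mul1r.
ring.
Qed.
End P.

Theorem theorem4 (R : comNzRingType) (p q : R) (b : seq nat) :
  sorted leq b ->
  'X ^+ size b =
  \sum_(k < (size b).+1)
     (rT (size b - k) b p q)%:P *
     \prod_(j < k) ('X - (Fib (nth 0%N b j) p q)%:P) :> {poly R}.
Proof.
move=> _.
pose a := fun j => Fib (nth 0%N b j) p q.
rewrite (poly_id _ a (size b)); apply: eq_bigr => k _.
rewrite /PP; apply: (congr2 (fun (x : R) (y : {poly R}) => x%:P * y)); last by [].
have hk := ltn_ord k.
transitivity (@K R (size b) a (size b - k) 0 0).
  rewrite KH //; [|lia].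
  rewrite !subn0 subKn //; lia.
rewrite -SK /rT.
apply: eq_big => [t|t _].
  by rewrite (_ : all (leq 0) _ = true) ?andbT //; apply/allP.
by apply: eq_bigr => s _; rewrite addn0.
Qed.
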